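(* Let $(V,\sim)$ be a finite graph with side data $\mathrm{left}(\cdot),\mathrm{right}(\cdot)$ as in the context, and assume $(V,\sim)$ admits a conformal model. Let $Q\subseteq V$ be a prime node of the modular decomposition tree of $(V,\sim)$ with children $M_1,\ldots,M_n$, and let $U \subseteq Q$ contain exactly one vertex from each $M_j$. Fix $i \in \{1,\ldots,n\}$ and $v,w \in M_i$. (1) If $M_i$ is parallel (i.e. $(M_i,\sim)$ is disconnected), then the following are equivalent: (a) for every $u \in Q \setminus M_i$ with $u \parallel M_i$, either $\{v,w\} \subseteq \mathrm{left}(u)$ or $\{v,w\} \subseteq \mathrm{right}(u)$; (b) for every $u \in U \setminus M_i$ with $u \parallel M_i$, either $\{v,w\} \subseteq \mathrm{left}(u)$ or $\{v,w\} \subseteq \mathrm{right}(u)$. (2) If $M_i$ is serial (i.e. the complement of $(M_i,\sim)$ is disconnected), then the following are equivalent: (a) $\{\mathrm{left}(v) \cap (Q\setminus M_i), \mathrm{right}(v) \cap (Q \setminus M_i)\} = \{\mathrm{left}(w) \cap (Q\setminus M_i), \mathrm{right}(w) \cap (Q \setminus M_i)\}$; (b) $\{\mathrm{left}(v) \cap (U\setminus M_i), \mathrm{right}(v) \cap (U \setminus M_i)\} = \{\mathrm{left}(w) \cap (U\setminus M_i), \mathrm{right}(w) \cap (U \setminus M_i)\}$.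
   Context: Graph and side data. $(V,\sim)$ is a finite simple graph; $u \parallel v$ means $u \ne v$ and $u,v$ non-adjacent; for sets, $X\sim Y$ / $X \parallel Y$ means the relation holds for all pairs $x\in X$, $y\in Y$ (and $u \parallel M$ means $\{u\}\parallel M$). For every $u \in V$ we are given a partition of $\{v\in V: v \parallel u\}$ into $\mathrm{left}(u)$ and $\mathrm{right}(u)$. (In the paper $(V,\sim)$ is the overlap graph $G_{ov}$ of a circular-arc graph and the sides come from its arc model; conditions (a) in both items are the paper's definition of the $K$-relation on a parallel, resp. serial, child $M_i$.) Conformal models. For $X\subseteq V$, a conformal model of $(X,\sim)$ is a circular word (up to rotation) in which each letter $u^0,u^1$, $u \in X$, occurs exactly once, such that for distinct $u,v\in X$ the letters of $u$ and $v$ alternate iff $u \sim v$, and for $u \parallel v$ both letters of $v$ lie between $u^0$ and $u^1$ (reading cyclically forward from $u^0$) iff $v \in \mathrm{left}(u)$, and both lie between $u^1$ and $u^0$ iff $v \in \mathrm{right}(u)$. Modular decomposition. A module of $(X,\sim)$ is a set $M\subseteq X$ such that every vertex outside $M$ is adjacent to all or none of $M$; it is trivial if $|M|\le1$ or $M=X$; a graph is prime if it has only trivial modules. $Q$ is a prime node of the modular decomposition tree of $(V,\sim)$ whose children $M_1,\ldots,M_n$ are the maximal strong modules properly contained in $Q$, the quotient graph on one representative per child being prime. *)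

(* Defs.v *)
From mathcomp Require Import all_boot.
Set Implicit Arguments. Unset Strict Implicit. Unset Printing Implicit Defensive.

Section Defs.
Variables (V : finType) (adj : rel V).

Definition nonadj (u v : V) : bool := (u != v) && ~~ adj u v.

(* Letters u^0 = (u,false), u^1 = (u,true).
   [cbetween s x y z]: reading the circular word s cyclically forward from
   letter x, the letter z occurs strictly before letter y. *)
Definition cbetween (s : seq (V * bool)) (x y z : V * bool) : bool :=
  let a := index x s in let b := index y s in let p := index z s in
  if a < b then (a < p) && (p < b) else (a < p) || (p < b).

Definition conformal_model (L R : V -> {set V}) (s : seq (V * bool)) : Prop :=
  [/\ uniq s, (forall l : V * bool, l \in s),
      (forall u v : V, u != v ->
        (adj u v <-> (cbetween s (u, false) (u, true) (v, false)
                      != cbetween s (u, false) (u, true) (v, true)))),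
      (forall u v : V, nonadj u v ->
        ((v \in L u) <-> (cbetween s (u, false) (u, true) (v, false)
                          && cbetween s (u, false) (u, true) (v, true))))
    & (forall u v : V, nonadj u v ->
        ((v \in R u) <-> (cbetween s (u, true) (u, false) (v, false)
                          && cbetween s (u, true) (u, false) (v, true))))].

Definition module_in (X M : {set V}) : bool :=
  (M \subset X) &&
  [forall x in X :\: M, [forall y in M, adj x y] || [forall y in M, ~~ adj x y]].

Definition module (M : {set V}) : bool := module_in [set: V] M.

Definition trivial_module (X M : {set V}) : bool := (#|M| <= 1) || (M == X).

Definition prime_in (X : {set V}) : bool :=
  [forall M : {set V}, module_in X M ==> trivial_module X M].

Definition strong_module (M : {set V}) : bool :=
  module M &&
  [forall M' : {set V}, module M' ==>
     [|| M :&: M' == set0, M \subset M' | M' \subset M]].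

Definition md_children (Q : {set V}) : {set {set V}} :=
  [set M | [&& strong_module M, M \proper Q &
     [forall M' : {set V}, (strong_module M' && (M' \proper Q)) ==> ~~ (M \proper M')]]].

Definition representatives (Q U : {set V}) : bool :=
  (U \subset Q) && [forall M in md_children Q, #|U :&: M| == 1].

(* Q is a prime node: a strong module whose quotient (the graph induced on a
   set of representatives of its children) is prime, with at least 3 children
   (so that Q is neither a parallel nor a serial node). *)
Definition prime_node (Q : {set V}) : Prop :=
  [/\ strong_module Q, 2 < #|md_children Q| &
      forall U : {set V}, representatives Q U -> prime_in U].

Definition connected_in (e : rel V) (X : {set V}) : bool :=
  [forall x in X, forall y in X,
     connect [rel a b | [&& a \in X, b \in X & e a b]] x y].

Definition parallel (M : {set V}) : bool := ~~ connected_in adj M.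
Definition serial (M : {set V}) : bool := ~~ connected_in nonadj M.

End Defs.

(* Main.v *)
Require Import Defs.
From mathcomp Require Import all_boot.
From mathcomp Require Import zify.
Set Implicit Arguments. Unset Strict Implicit. Unset Printing Implicit Defensive.

Definition inn (a b p : nat) := (a < p) && (p < b).
Lemma innT a b p : inn a b p = true -> (a < p /\ p < b)%coq_nat.
Proof. by case/andP => /ltP ? /ltP ?. Qed.
Lemma innF a b p : inn a b p = false -> (p <= a \/ b <= p)%coq_nat.
Proof. rewrite /inn. case: (ltnP a p) => [_|/leP]; last by left.
 by move=> /= /negbT; rewrite -leqNgt => /leP; right. Qed.
Ltac cb := match goal with
  | |- context [inn ?a ?b ?p] => let E := fresh "E" in case E: (inn a b p);
      [move/innT: E => E | move/innF: E => E]
  end.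
Lemma far_nat (a0 a1 v0 v1 p : nat) :
  a0 < a1 -> v0 < v1 -> a0 != v0 -> a0 != v1 -> a1 != v0 -> a1 != v1 ->
  p != a0 -> p != a1 -> p != v0 -> p != v1 ->
  inn v0 v1 a0 = inn v0 v1 a1 -> inn v0 v1 p != inn v0 v1 a0 ->
  inn a0 a1 p = inn a0 a1 v0.
Proof.
move=> /ltP ? /ltP ? /eqP ? /eqP ? /eqP ? /eqP ? /eqP ? /eqP ? /eqP ? /eqP ?.
repeat cb => //; lia.
Qed.

Lemma br_nat (a b p : nat) : a != b -> p != a -> p != b ->
  (if a < b then (a < p) && (p < b) else (a < p) || (p < b))
  = ((a < b) == inn (minn a b) (maxn a b) p).
Proof.
rewrite /inn; case: (ltngtP a b) => // H _ pa pb.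
case: (ltngtP a p) => Hap; case: (ltngtP p b) => Hpb //=.
- by rewrite Hpb eqxx in pb.
- by rewrite Hap eqxx in pa.
- by rewrite Hap eqxx in pa.
Qed.

Section Geo.
Variables (V : finType) (adj : rel V) (L R : V -> {set V}).
Hypothesis adj_sym : symmetric adj.
Hypothesis adj_irr : irreflexive adj.
Hypothesis sides : forall u : V,
     L u :&: R u = set0 /\ L u :|: R u = [set v | nonadj adj u v].
Variable s : seq (V * bool).
Hypothesis Hs : conformal_model adj L R s.

Definition P x b := index (x, b) s.
Lemma P_inj x b y c : P x b = P y c -> x = y /\ b = c.
Proof.
case: Hs => _ Hin _ _ _ E.
have := nth_index (x, b) (Hin (x, b)); rewrite -/(P x b) E /P nth_index //.
by case=> -> ->.
Qed.
Lemma P_neq x b y c : x != y -> P x b != P y c.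
Proof. by move=> xy; apply/eqP => /P_inj [E _]; rewrite E eqxx in xy. Qed.
Lemma P_neq2 x : P x false != P x true.
Proof. by apply/eqP => /P_inj []. Qed.

Definition lo x := minn (P x false) (P x true).
Definition hi x := maxn (P x false) (P x true).
Definition In x p := inn (lo x) (hi x) p.
Definition S x y := In x (P y false).

Lemma lohi x : (lo x = P x false /\ hi x = P x true) \/ (lo x = P x true /\ hi x = P x false).
Proof.
rewrite /lo /hi; case: (leqP (P x false) (P x true)) => H.
- by left; split; lia.
- by right; split; lia.
Qed.
Lemma lo_hi x : lo x < hi x.
Proof. rewrite /lo /hi; move: (P_neq2 x); case: (ltngtP (P x false) (P x true)) => //; by rewrite eqxx. Qed.

Lemma cb_eq u z : z.1 != u ->
  cbetween s (u, false) (u, true) z = ((P u false < P u true) == In u (index z s)).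
Proof.
move=> zu; rewrite /cbetween /In /lo /hi -/(P u false) -/(P u true).
case: z zu => y c /= yu.
apply: br_nat; first exact: P_neq2.
- by apply: P_neq.
- by apply: P_neq.
Qed.

Lemma cb_eq' u z : z.1 != u ->
  cbetween s (u, true) (u, false) z = ((P u true < P u false) == In u (index z s)).
Proof.
move=> zu; rewrite /cbetween /In /lo /hi -/(P u false) -/(P u true) minnC maxnC.
case: z zu => y c /= yu.
apply: br_nat; first by rewrite eq_sym P_neq2.
- by apply: P_neq.
- by apply: P_neq.
Qed.

Lemma adjE u v : u != v -> adj u v = (In u (P v false) != In u (P v true)).
Proof.
move=> uv; case: Hs => _ _ H3 _ _.
have vu : v != u by rewrite eq_sym.
apply/idP/idP => [/(H3 u v uv)|H]; first by rewrite !cb_eq //; case: (_ < _); case: In; case: In.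
by apply/(H3 u v uv); rewrite !cb_eq //; move: H; case: (_ < _); case: In; case: In.
Qed.

Lemma nadjS u t : u != t -> ~~ adj u t -> forall c, In u (P t c) = S u t.
Proof. by move=> ut; rewrite adjE // negbK => /eqP E [] //; rewrite /S E. Qed.

Lemma LE u v : nonadj adj u v -> (v \in L u) = (S u v == (P u false < P u true)).
Proof.
case/andP=> uv nadj; case: Hs => _ _ _ H4 _.
have vu : v != u by rewrite eq_sym.
have E := nadjS uv nadj.
apply/idP/idP => [/(H4 u v (introT andP (conj uv nadj)))|H].
  by rewrite !cb_eq // !E => /andP [/eqP -> _].
by apply/(H4 u v (introT andP (conj uv nadj))); rewrite !cb_eq // !E eq_sym H.
Qed.

Lemma RE u v : nonadj adj u v -> (v \in R u) = ~~ (v \in L u).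
Proof.
move=> H; case: (sides u) => HI HU.
have : v \in L u :|: R u by rewrite HU inE.
rewrite inE; case/orP => Hv.
  by have : v \in L u :&: R u = false; [rewrite HI inE | rewrite inE Hv /= => ->].
rewrite Hv; apply/esym/negP => Hl.
by have : v \in L u :&: R u = false; [rewrite HI inE | rewrite inE Hv Hl].
Qed.

Lemma pick_pt x y : x != y -> adj x y -> forall beta, exists b, In x (P y b) != beta.
Proof.
move=> xy; rewrite adjE // => H beta.
case E: (In x (P y false) == beta); last by exists false; rewrite E.
by exists true; move/eqP: E => E; rewrite -E eq_sym.
Qed.

Lemma far a v y b : a != v -> y != a -> y != v -> ~~ adj v a ->
  In v (P y b) != S v a -> In a (P y b) = S a v.
Proof.
move=> av ya yv nva H.
have va : v != a by rewrite eq_sym.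
have nav : ~~ adj a v by rewrite adj_sym.
have Ea := nadjS va nva. have Ev := nadjS av nav.
have -> : S a v = In a (lo v) by case: (lohi v) => [[-> _]|[-> _]]; rewrite ?Ev.
have H' : In v (P y b) != In v (lo a).
  by case: (lohi a) => [[-> _]|[-> _]]; rewrite Ea.
have Hn : In v (lo a) = In v (hi a).
  by case: (lohi a) => [[-> ->]|[-> ->]]; rewrite !Ea.
move: H' Hn; rewrite /In => H' Hn.
have nP : forall x c z d, x != z -> P x c != P z d by move=> *; apply: P_neq.
apply: (@far_nat (lo a) (hi a) (lo v) (hi v) (P y b)) => //; try exact: lo_hi.
all: case: (lohi a) => [[Ea1 Ea2]|[Ea1 Ea2]]; case: (lohi v) => [[Ev1 Ev2]|[Ev1 Ev2]];
  rewrite ?Ea1 ?Ea2 ?Ev1 ?Ev2; by apply: P_neq.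
Qed.

Lemma cross_of x y : x != y -> In x (P y false) != In x (P y true) -> adj x y.
Proof. by move=> xy H; rewrite adjE. Qed.

Lemma two_pts x y b1 b2 beta1 beta2 :
  In x (P y b1) = beta1 -> In x (P y b2) = beta2 -> beta1 != beta2 ->
  In x (P y false) != In x (P y true).
Proof.
move=> H1 H2; case: b1 H1; case: b2 H2 => <- <- //; rewrite ?eqxx //.
by rewrite eq_sym.
Qed.

Lemma same_pts x y b1 b2 :
  b1 != b2 -> In x (P y b1) = In x (P y b2) -> In x (P y false) = In x (P y true).
Proof. by case: b1; case: b2. Qed.

Lemma sep c a b y : c != a -> c != b -> y != c -> y != a -> y != b ->
  ~~ adj c a -> ~~ adj c b -> S c a != S c b -> adj a y -> adj b y -> adj c y.
Proof.
move=> ca cb yc ya yb nca ncb Hs' ay by_.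
have ac : a != c by rewrite eq_sym. have bc : b != c by rewrite eq_sym.
have ay' : a != y by rewrite eq_sym. have by' : b != y by rewrite eq_sym.
have nac : ~~ adj a c by rewrite adj_sym. have nbc : ~~ adj b c by rewrite adj_sym.
case: (pick_pt ay' ay (S a c)) => b1 H1.
case: (pick_pt by' by_ (S b c)) => b2 H2.
have F1 := far ca yc ya nac H1. have F2 := far cb yc yb nbc H2.
apply: cross_of; first by rewrite eq_sym.
exact: two_pts F1 F2 Hs'.
Qed.

Lemma G1 u u' v w x :
  u != v -> u != w -> u' != v -> u' != w ->
  x != u -> x != u' -> x != v -> x != w ->
  ~~ adj u v -> ~~ adj u w -> ~~ adj u' v -> ~~ adj u' w ->
  S u v != S u w -> S u' v = S u' w -> S v u = S v u' -> S w u = S w u' ->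
  adj v x -> adj w x -> adj u' x -> False.
Proof.
move=> uv uw u'v u'w xu xu' xv xw nuv nuw nu'v nu'w D E1 E2 E3 vx wx u'x.
have vu : v != u by rewrite eq_sym. have wu : w != u by rewrite eq_sym.
have vu' : v != u' by rewrite eq_sym. have wu' : w != u' by rewrite eq_sym.
have vx' : v != x by rewrite eq_sym. have wx' : w != x by rewrite eq_sym.
have nvu : ~~ adj v u by rewrite adj_sym. have nwu : ~~ adj w u by rewrite adj_sym.
have nvu' : ~~ adj v u' by rewrite adj_sym. have nwu' : ~~ adj w u' by rewrite adj_sym.
case: (pick_pt vx' vx (S v u)) => b1 H1.
case: (pick_pt wx' wx (S w u)) => b2 H2.
have F1 := far uv xu xv nvu H1.
have F2 := far uw xu xw nwu H2.
have H1' : In v (P x b1) != S v u' by rewrite -E2.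
have H2' : In w (P x b2) != S w u' by rewrite -E3.
have F1' := far u'v xu' xv nvu' H1'.
have F2' := far u'w xu' xw nwu' H2'.
have b12 : b1 != b2.
  by apply/eqP => E; move: D; rewrite -F1 -F2 E eqxx.
have : ~~ adj u' x.
  rewrite adjE; last by rewrite eq_sym.
  by rewrite (same_pts b12) ?eqxx // F1' F2' E1.
by rewrite u'x.
Qed.

Lemma G2 u u' v w x t :
  u != v -> u != w -> u' != v -> u' != w -> u != x -> u' != x -> v != x ->
  t != u -> t != u' -> t != w -> x != w ->
  ~~ adj u v -> ~~ adj u w -> ~~ adj u' v -> ~~ adj u' w ->
  S w u != S w u' -> S v u = S v u' ->
  adj u x -> adj u' x -> adj v x -> adj w t ->
  (forall c, In u (P t c) = S u v) -> (forall c, In u' (P t c) = S u' v) -> False.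
Proof.
move=> uv uw u'v u'w ux u'x vx tu tu' tw xw nuv nuw nu'v nu'w D E adjux adju'x adjvx adjwt Tu Tu'.
have vu : v != u by rewrite eq_sym. have vu' : v != u' by rewrite eq_sym.
have wu : w != u by rewrite eq_sym. have wu' : w != u' by rewrite eq_sym.
have xu : x != u by rewrite eq_sym. have xu' : x != u' by rewrite eq_sym.
have xv : x != v by rewrite eq_sym.
have nvu : ~~ adj v u by rewrite adj_sym. have nvu' : ~~ adj v u' by rewrite adj_sym.
case: (pick_pt vx adjvx (S v u)) => b1 H1.
have H1' : In v (P x b1) != S v u' by rewrite -E.
have F1 := far uv xu xv nvu H1.
have F1' := far u'v xu' xv nvu' H1'.
have Q1 : In u (P x (~~ b1)) != S u v.
  rewrite -F1; move: (adjux); rewrite adjE //; by case: (b1) => //=; rewrite eq_sym.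
have Q1' : In u' (P x (~~ b1)) != S u' v.
  rewrite -F1'; move: (adju'x); rewrite adjE //; by case: (b1) => //=; rewrite eq_sym.
have nwt : ~~ adj w t.
  rewrite adjE; last by rewrite eq_sym.
  apply/negPn/eqP.
  case Ew: (S u w == S u v).
  - case Ew': (S u' w == S u' v).
    + move/eqP: Ew => Ew; move/eqP: Ew' => Ew'.
      have Q2 : In u (P x (~~ b1)) != S u w by rewrite Ew.
      have Q2' : In u' (P x (~~ b1)) != S u' w by rewrite Ew'.
      have G := far wu xw xu nuw Q2.
      have G' := far wu' xw xu' nu'w Q2'.
      by move: D; rewrite -G -G' eqxx.
    + have T : forall c, In u' (P t c) != S u' w by move=> c; rewrite Tu' eq_sym Ew'.
      by rewrite (far wu' tw tu' nu'w (T false)) (far wu' tw tu' nu'w (T true)).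
  - have T : forall c, In u (P t c) != S u w by move=> c; rewrite Tu eq_sym Ew.
    by rewrite (far wu tw tu nuw (T false)) (far wu tw tu nuw (T true)).
by rewrite adjwt in nwt.
Qed.



End Geo.

Section Comb.
Variables (V : finType) (adj : rel V).
Hypothesis adj_sym : symmetric adj.
Hypothesis adj_irr : irreflexive adj.

Lemma strong_mod M : strong_module adj M -> forall x y y', x \notin M -> y \in M -> y' \in M -> adj x y = adj x y'.
Proof.
rewrite /strong_module /module /module_in.
case/andP => /andP [_ /forall_inP H] _ x y y' xM yM y'M.
have : x \in [set: V] :\: M by rewrite !inE xM.
move/H => /orP [/forall_inP A | /forall_inP B]; first by rewrite !A.
by rewrite (negbTE (B _ yM)) (negbTE (B _ y'M)).
Qed.

Lemma strong1 x : strong_module adj [set x].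
Proof.
rewrite /strong_module /module /module_in.
apply/andP; split.
  apply/andP; split; first exact: subsetT.
  apply/forall_inP => z _; case E: (adj z x).
    by apply/orP; left; apply/forall_inP => y /set1P ->.
  by apply/orP; right; apply/forall_inP => y /set1P ->; rewrite E.
apply/forallP => M'; apply/implyP => _.
case xM: (x \in M'); first by rewrite sub1set xM orbT.
apply/orP; left; apply/eqP/setP => y; rewrite !inE.
by case: (eqVneq y x) => // ->; rewrite xM.
Qed.

Variable Q : {set V}.
Hypothesis HQ : prime_node adj Q.
Variable U : {set V}.
Hypothesis HU : representatives adj Q U.

Notation ch := (md_children adj Q).

Lemma ch_strong M : M \in ch -> strong_module adj M.
Proof. by rewrite inE => /and3P []. Qed.

Lemma ch_mod M : M \in ch -> forall x y y', x \notin M -> y \in M -> y' \in M -> adj x y = adj x y'.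
Proof. by move/ch_strong/strong_mod. Qed.

Lemma ch_sub M : M \in ch -> M \subset Q.
Proof. by rewrite inE => /and3P [_ /proper_sub]. Qed.

Lemma ch_max M M' : M \in ch -> strong_module adj M' -> M' \proper Q -> ~~ (M \proper M').
Proof.
rewrite inE => /and3P [_ _ /forallP H] sM' pM'.
by have := H M'; rewrite sM' pM'.
Qed.

Lemma ch_disj M1 M2 z : M1 \in ch -> M2 \in ch -> z \in M1 -> z \in M2 -> M1 = M2.
Proof.
move=> c1 c2 z1 z2.
have s1 := ch_strong c1. have s2 := ch_strong c2.
have p1 : M1 \proper Q by move: c1; rewrite inE => /and3P [].
have p2 : M2 \proper Q by move: c2; rewrite inE => /and3P [].
move: (s1) => /andP [_ /forallP /(_ M2)].
rewrite (proj1 (andP s2)) /= => /or3P [/eqP E | S12 | S21].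
- have : z \in M1 :&: M2 by rewrite inE z1 z2.
  by rewrite E inE.
- apply/eqP; apply: contraNT (ch_max c1 s2 p2) => ne.
  by rewrite properEneq ne S12.
- apply/esym/eqP; apply: contraNT (ch_max c2 s1 p1) => ne.
  by rewrite properEneq ne S21.
Qed.

Lemma ch_big : 2 < #|ch|.
Proof. by case: HQ. Qed.

Lemma prime_U : forall M, module_in adj U M -> trivial_module U M.
Proof. case: HQ => _ _ H M; by move/implyP: (forallP (H U HU) M). Qed.

Lemma ch_cover x : x \in Q -> exists2 M, M \in ch & x \in M.
Proof.
move=> xQ.
have Qx : Q != [set x].
  apply/eqP => EQ; have := ch_big.
  have : ch \subset [set set0].
    apply/subsetP => M; rewrite inE => /and3P [_ pM _]; rewrite inE.
    move: (proper_card pM); rewrite EQ cards1 ltnS leqn0 => /eqP/cards0_eq ->.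
    by [].
  by move/subset_leq_card; rewrite cards1; case: #|ch| => [|[|]].
pose F := [pred M : {set V} | [&& strong_module adj M, M \proper Q & x \in M]].
have Fx : F [set x].
  rewrite /F /= strong1 set11 andbT properEneq eq_sym Qx sub1set xQ //.
case: (@arg_maxnP _ [set x] F (fun M : {set V} => #|M|) Fx) => M /and3P [sM pM xM] Hmax.
exists M => //; rewrite inE sM pM /=.
apply/forallP => M'; apply/implyP => /andP [sM' pM']; apply/negP => pMM'.
have : F M' by rewrite /F /= sM' pM' (subsetP (proper_sub pMM')).
move/Hmax; apply/negP; rewrite -ltnNge.
by rewrite (proper_card pMM').
Qed.

Lemma rep M : M \in ch -> exists r, U :&: M = [set r].
Proof.
move=> Mch; case/andP: HU => _ /forall_inP /(_ M Mch).
by move/cards1P.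
Qed.

Lemma U_sub : U \subset Q.
Proof. by case/andP: HU. Qed.

Lemma U_big : 2 < #|U|.
Proof.
pose C z := odflt set0 [pick M in ch | z \in M].
have : ch \subset [set C z | z in U].
  apply/subsetP => M Mch; case: (rep Mch) => r E.
  have : r \in U :&: M by rewrite E set11.
  rewrite inE => /andP [rU rM].
  apply/imsetP; exists r => //; rewrite /C.
  case: pickP => [M' /andP [M'ch rM'] | none] /=.
    exact: (ch_disj Mch M'ch rM rM').
  by have := none M; rewrite Mch rM.
move/subset_leq_card => H.
apply: (leq_trans ch_big); apply: (leq_trans H); exact: leq_imset_card.
Qed.

Lemma conn r : r \in U -> exists2 x, x \in U & adj r x.
Proof.
move=> rU; case E: [exists (x | x \in U), adj r x].
  by case/exists_inP: E => x; exists x.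
exfalso; move/negbT/exists_inPn: E => E.
have : module_in adj U (U :\ r).
  rewrite /module_in subD1set /=; apply/forall_inP => z.
  rewrite !inE => /andP [zr zU]; move: zr; rewrite zU andbT negbK => /eqP ->.
  by apply/orP; right; apply/forall_inP => y; rewrite !inE => /andP [_ /E].
move/prime_U; rewrite /trivial_module => /orP [H1|/eqP EU].
  have := U_big; rewrite (cardsD1 r U) rU add1n ltnS => H.
  by have := leq_trans H H1.
have : r \in U :\ r by rewrite EU.
by rewrite !inE eqxx.
Qed.

Lemma twin a b : a \in U -> b \in U -> a != b ->
  (forall z, z \in U -> z != a -> z != b -> adj z a = adj z b) -> False.
Proof.
move=> aU bU ab H.
have : module_in adj U [set a; b].
  rewrite /module_in; apply/andP; split.
    by apply/subsetP => y /set2P [->|->].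
  apply/forall_inP => z; rewrite !inE negb_or => /andP [/andP [za zb] zU].
  case E: (adj z a).
    by apply/orP; left; apply/forall_inP => y /set2P [->|->] //; rewrite -H.
  by apply/orP; right; apply/forall_inP => y /set2P [->|->]; rewrite ?E // -H ?E.
move/prime_U; rewrite /trivial_module cards2 ab /=.
move/eqP => EU; have := U_big; rewrite -EU cards2 ab.
by [].
Qed.
End Comb.

Lemma serial_t (V : finType) (adj : rel V) (adj_sym : symmetric adj) (M : {set V}) p q :
  serial adj M -> p \in M -> q \in M -> p != q -> ~~ adj p q ->
  exists2 t, t \in M & adj p t && adj q t.
Proof.
move=> Hser pM qM pq npq.
case E: [exists (t | t \in M), adj p t && adj q t].
  by case/exists_inP: E => t; exists t.
exfalso; move/negbT/exists_inPn: E => E.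
move: Hser; rewrite /serial => /negP; apply.
set e := [rel a b | [&& a \in M, b \in M & nonadj adj a b]].
have esym : symmetric e.
  move=> a b; rewrite /e /= /nonadj adj_sym eq_sym.
  by case: (a \in M); case: (b \in M); rewrite ?andbF.
have Cp : forall y, y \in M -> connect e p y.
  move=> y yM; case: (eqVneq y p) => [->|yp]; first exact: connect0.
  case Ap: (adj p y).
    have Aq : ~~ adj q y by have := E y yM; rewrite Ap /=.
    have yq : y != q by apply: contraTneq Ap => ->; rewrite (negbTE npq).
    apply: (connect_trans (y := q)); apply: connect1; rewrite /e /= ?pM ?qM ?yM /nonadj /=.
    - by rewrite pq npq.
    - by rewrite eq_sym yq Aq.
  by apply: connect1; rewrite /e /= pM yM /nonadj eq_sym yp Ap.
apply/forall_inP => x xM; apply/forall_inP => y yM.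
apply: (connect_trans (y := p)); last exact: Cp.
by rewrite (sym_connect_sym esym); apply: Cp.
Qed.

Lemma pairE (T : finType) (A B C D : {set T}) :
  [set A; B] = [set C; D] <-> (A = C /\ B = D) \/ (A = D /\ B = C).
Proof.
split; last by case=> [[-> ->]|[-> ->]]; rewrite // setUC.
move=> E.
have hA : A \in [set C; D] by rewrite -E set21.
have hB : B \in [set C; D] by rewrite -E set22.
have hC : C \in [set A; B] by rewrite E set21.
have hD : D \in [set A; B] by rewrite E set22.
case/set2P: hA => EA; case/set2P: hB => EB; subst A B.
- by case/set2P: hD => ->; left.
- by left.
- by right.
- by case/set2P: hC => ->; left.
Qed.

Lemma boolLR (a b o : bool) : ((a == o) && (b == o) \/ ~~(a == o) && ~~(b == o)) <-> a = b.
Proof. by case: a; case: b; case: o; split => //=; (try by left); (try by right); case. Qed.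

Section Main.
Variables (V : finType) (adj : rel V) (L R : V -> {set V}).
Hypothesis adj_sym : symmetric adj.
Hypothesis adj_irr : irreflexive adj.
Hypothesis sides : forall u : V,
     L u :&: R u = set0 /\ L u :|: R u = [set v | nonadj adj u v].
Variable s : seq (V * bool).
Hypothesis Hs : conformal_model adj L R s.
Variable Q : {set V}.
Hypothesis HQ : prime_node adj Q.
Variable U : {set V}.
Hypothesis HU : representatives adj Q U.
Variable Mi : {set V}.
Hypothesis HMi : Mi \in md_children adj Q.

Lemma repP M r : U :&: M = [set r] -> [/\ r \in U, r \in M & forall z, z \in U -> z \in M -> z = r].
Proof.
move=> E; have : r \in U :&: M by rewrite E set11.
rewrite inE => /andP [rU rM]; split=> // z zU zM.
have : z \in U :&: M by rewrite inE zU zM.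
by rewrite E => /set1P.
Qed.

Lemma notin_other M1 M2 x : M1 \in md_children adj Q -> M2 \in md_children adj Q ->
  M1 != M2 -> x \in M1 -> x \notin M2.
Proof. by move=> c1 c2 ne x1; apply/negP => x2; rewrite (ch_disj c1 c2 x1 x2) eqxx in ne. Qed.

Lemma LRnadj x y : (y \in L x) || (y \in R x) -> nonadj adj x y.
Proof. by case: (sides x) => _ HU'; rewrite -in_setU HU' inE. Qed.

Lemma sideLR u v w : nonadj adj u v -> nonadj adj u w ->
  ([set v; w] \subset L u \/ [set v; w] \subset R u) <-> S s u v = S s u w.
Proof.
move=> nv nw; rewrite !subUset !sub1set (RE sides nv) (RE sides nw) (LE Hs nv) (LE Hs nw).
exact: boolLR.
Qed.

Lemma nsym x y : nonadj adj x y -> nonadj adj y x.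
Proof. by rewrite /nonadj eq_sym adj_sym. Qed.

Lemma part1 v w : v \in Mi -> w \in Mi ->
  ((forall u, u \in Q :\: Mi -> (forall x, x \in Mi -> nonadj adj u x) ->
         [set v; w] \subset L u \/ [set v; w] \subset R u)
      <->
      (forall u, u \in U :\: Mi -> (forall x, x \in Mi -> nonadj adj u x) ->
         [set v; w] \subset L u \/ [set v; w] \subset R u)).
Proof.
move=> Hv Hw; split=> Hb u.
  move=> /setDP [uU uMi] Hn; apply: Hb => //.
  by rewrite inE uMi (subsetP (U_sub HU)).
move=> /setDP [uQ uMi] Hn.
have nv := Hn v Hv; have nw := Hn w Hw.
apply/(sideLR nv nw).
case: (ch_cover HQ uQ) => Mj Mjch uMj.
have MjMi : Mj != Mi by apply: contraNneq uMi => <-.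
case: (rep HU Mjch) => u' /repP [u'U u'Mj u'uniq].
have u'Mi : u' \notin Mi := notin_other Mjch HMi MjMi u'Mj.
have noMj : forall x, x \in Mi -> x \notin Mj.
  by move=> x xMi; apply: (notin_other HMi Mjch) => //; rewrite eq_sym.
have Hn' : forall x, x \in Mi -> nonadj adj u' x.
  move=> x xMi; rewrite /nonadj; apply/andP; split.
    by apply: contraNneq u'Mi => ->.
  rewrite adj_sym (ch_mod Mjch (noMj x xMi) u'Mj uMj) adj_sym.
  by case/andP: (Hn x xMi).
have := Hb u' (introT setDP (conj u'U u'Mi)) Hn'.
move/(sideLR (Hn' v Hv) (Hn' w Hw)) => E'.
apply/eqP/negPn/negP => D.
case: (rep HU HMi) => ri /repP [riU riMi riuniq].
case: (conn HQ HU riU) => x xU adjrx.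
have xMi : x \notin Mi.
  by apply/negP => xMi; rewrite (riuniq x xU xMi) adj_irr in adjrx.
have xv : adj v x by rewrite adj_sym (ch_mod HMi xMi Hv riMi) adj_sym.
have xw : adj w x by rewrite adj_sym (ch_mod HMi xMi Hw riMi) adj_sym.
case/andP: nv => uv nuv. case/andP: nw => uw nuw.
case/andP: (Hn' v Hv) => u'v nu'v. case/andP: (Hn' w Hw) => u'w nu'w.
have xneq : forall y, y \in Mi -> x != y by move=> y yM; apply: contraNneq xMi => ->.
have xu : x != u by apply: contraTneq xv => ->; rewrite adj_sym (negbTE nuv).
have xMj : x \notin Mj.
  apply/negP => xMj; have := u'uniq x xU xMj => E; rewrite E in xv.
  by rewrite adj_sym (negbTE nu'v) in xv.
have ux : adj u x.
  apply: (sep adj_sym Hs uv uw xu (xneq v Hv) (xneq w Hw) nuv nuw D xv xw).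
have u'x : adj u' x by rewrite adj_sym (ch_mod Mjch xMj u'Mj uMj) adj_sym.
have riu' : ri != u' by apply: contraNneq u'Mi => <-.
apply: (twin HQ HU riU u'U riu') => z zU zri zu'.
have zMi : z \notin Mi by apply/negP => zMi; rewrite (riuniq z zU zMi) eqxx in zri.
have zMj : z \notin Mj by apply/negP => zMj; rewrite (u'uniq z zU zMj) eqxx in zu'.
have zu : z != u by apply: contraNneq zMj => ->.
have zneq : forall y, y \in Mi -> z != y by move=> y yM; apply: contraNneq zMi => ->.
rewrite (ch_mod HMi zMi riMi Hv) (ch_mod Mjch zMj u'Mj uMj).
case Ezv: (adj z v).
  have Ezw : adj z w by rewrite (ch_mod HMi zMi Hw Hv).
  apply/esym; rewrite adj_sym.
  by apply: (sep adj_sym Hs uv uw zu (zneq v Hv) (zneq w Hw) nuv nuw D); rewrite adj_sym.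
apply/esym/negP => Ezu.
have Ezu' : adj z u' by rewrite (ch_mod Mjch zMj u'Mj uMj).
have Ezw : adj z w = false by rewrite (ch_mod HMi zMi Hw Hv).
have vu : v != u by rewrite eq_sym. have vu' : v != u' by rewrite eq_sym.
have wu : w != u by rewrite eq_sym. have wu' : w != u' by rewrite eq_sym.
have nvu : ~~ adj v u by rewrite adj_sym. have nvu' : ~~ adj v u' by rewrite adj_sym.
have nwu : ~~ adj w u by rewrite adj_sym. have nwu' : ~~ adj w u' by rewrite adj_sym.
have E2 : S s v u = S s v u'.
  apply/eqP/negPn/negP => D2.
  have := sep adj_sym Hs vu vu' (zneq v Hv) zu zu' nvu nvu' D2.
  by rewrite adj_sym Ezu adj_sym Ezu' adj_sym Ezv => /(_ isT isT).
have E3 : S s w u = S s w u'.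
  apply/eqP/negPn/negP => D2.
  have := sep adj_sym Hs wu wu' (zneq w Hw) zu zu' nwu nwu' D2.
  by rewrite adj_sym Ezu adj_sym Ezu' adj_sym Ezw => /(_ isT isT).
have xu' : x != u' by apply: contraNneq xMj => ->.
exact: (G1 adj_sym Hs uv uw u'v u'w xu xu' (xneq v Hv) (xneq w Hw) nuv nuw nu'v nu'w D E' E2 E3 xv xw u'x).
Qed.

Lemma K1 Mj u u' p q : serial adj Mi -> Mj \in md_children adj Q -> Mj != Mi ->
  u \in Mj -> u' \in Mj -> p \in Mi -> q \in Mi ->
  ~~ adj u p -> S s p u = S s p u' -> S s q u = S s q u'.
Proof.
move=> Hser Mjch MjMi uMj u'Mj pMi qMi nup E.
apply/eqP/negPn/negP => D.
have noMi : forall y, y \in Mj -> y \notin Mi := fun y yM => notin_other Mjch HMi MjMi yM.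
have noMj : forall y, y \in Mi -> y \notin Mj.
  by move=> y yM; apply: (notin_other HMi Mjch) => //; rewrite eq_sym.
have neqMM : forall a b, a \in Mi -> b \in Mj -> a != b.
  by move=> a b aM bM; apply: contraNneq (noMj a aM) => ->.
have nadjM : forall a b, a \in Mi -> b \in Mj -> ~~ adj a b.
  move=> a b aM bM; rewrite adj_sym (ch_mod HMi (noMi b bM) aM pMi) adj_sym.
  by rewrite (ch_mod Mjch (noMj p pMi) bM uMj) adj_sym.
case: (rep HU Mjch) => r /repP [rU rMj runiq].
case: (conn HQ HU rU) => x xU adjrx.
have xMj : x \notin Mj.
  by apply/negP => xMj; rewrite (runiq x xU xMj) adj_irr in adjrx.
have ux : adj u x by rewrite adj_sym (ch_mod Mjch xMj uMj rMj) adj_sym.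
have u'x : adj u' x by rewrite adj_sym (ch_mod Mjch xMj u'Mj rMj) adj_sym.
have xMi : x \notin Mi.
  by apply/negP => xMi; have := nadjM x u xMi uMj; rewrite adj_sym ux.
have xneq : forall y, y \in Mi -> x != y by move=> y yM; apply: contraNneq xMi => ->.
have xneq' : forall y, y \in Mj -> x != y by move=> y yM; apply: contraNneq xMj => ->.
have qx : adj q x.
  by apply: (sep adj_sym Hs (neqMM q u qMi uMj) (neqMM q u' qMi u'Mj) (xneq q qMi)
     (xneq' u uMj) (xneq' u' u'Mj) (nadjM q u qMi uMj) (nadjM q u' qMi u'Mj) D ux u'x).
have px : adj p x by rewrite adj_sym (ch_mod HMi xMi pMi qMi) adj_sym.
have pq : p != q by apply: contraNneq D => <-; rewrite E.
have sym_neq : forall a b : V, a != b -> b != a by move=> a b; rewrite eq_sym.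
have sym_nadj : forall a b, ~~ adj a b -> ~~ adj b a by move=> a b; rewrite adj_sym.
have up : u != p by apply: sym_neq; apply: neqMM.
have u'p : u' != p by apply: sym_neq; apply: neqMM.
have nup' : ~~ adj u p by apply: sym_nadj; apply: nadjM.
have nu'p : ~~ adj u' p by apply: sym_nadj; apply: nadjM.
have T : exists2 t, t \in Mi & adj q t && [forall c, (In s u (P s t c) == S s u p) && (In s u' (P s t c) == S s u' p)].
  case Apq: (adj p q).
    exists p => //; rewrite adj_sym Apq /=; apply/forallP => c.
    by rewrite (nadjS Hs up nup') (nadjS Hs u'p nu'p) !eqxx.
  case: (serial_t adj_sym Hser pMi qMi pq (negbT Apq)) => t tMi /andP [pt qt].
  exists t => //; rewrite qt /=; apply/forallP => c.
  have pt' : p != t by apply: contraTneq pt => ->; rewrite adj_irr.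
  case: (pick_pt Hs pt' pt (S s p u)) => c1 H1.
  have H1' : In s p (P s t c1) != S s p u' by rewrite -E.
  have tu : t != u by apply: neqMM.
  have tu' : t != u' by apply: neqMM.
  have F1 := far adj_sym Hs up tu (sym_neq _ _ pt') (nadjM p u pMi uMj) H1.
  have F2 := far adj_sym Hs u'p tu' (sym_neq _ _ pt') (nadjM p u' pMi u'Mj) H1'.
  rewrite !(nadjS Hs (sym_neq _ _ tu) (sym_nadj _ _ (nadjM t u tMi uMj))).
  rewrite !(nadjS Hs (sym_neq _ _ tu') (sym_nadj _ _ (nadjM t u' tMi u'Mj))).
  by rewrite -(nadjS Hs (sym_neq _ _ tu) (sym_nadj _ _ (nadjM t u tMi uMj)) c1) F1
    -(nadjS Hs (sym_neq _ _ tu') (sym_nadj _ _ (nadjM t u' tMi u'Mj)) c1) F2 !eqxx.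
case: T => t tMi /andP [qt /forallP Ht].
have Tu : forall c, In s u (P s t c) = S s u p by move=> c; case/andP: (Ht c) => /eqP.
have Tu' : forall c, In s u' (P s t c) = S s u' p by move=> c; case/andP: (Ht c) => _ /eqP.
have qt' : adj q t by [].
have tq : t != q by apply: contraTneq qt => ->; rewrite adj_irr.
apply: (G2 adj_sym Hs (u := u) (u' := u') (v := p) (w := q) (x := x) (t := t)) => //.
all: try by (apply: sym_neq; apply: neqMM).
all: try by (apply: neqMM).
all: try by (apply: sym_neq; apply: xneq').
all: try by (apply: sym_neq; apply: xneq).
all: try by (apply: xneq).
all: try by (apply: sym_nadj; apply: nadjM).
all: try by rewrite adj_sym.
Qed.

Lemma notLR x y : adj x y -> (y \in L x) = false /\ (y \in R x) = false.
Proof.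
move=> A; split; apply/negP => H.
- by have := LRnadj (introT orP (or_introl H)); rewrite /nonadj A andbF.
- by have := LRnadj (introT orP (or_intror H)); rewrite /nonadj A andbF.
Qed.

Lemma eqo (a b o : bool) : ((a == o) == (b == o)) = (a == b).
Proof. by case: a; case: b; case: o. Qed.

Lemma key v w u : serial adj Mi -> v \in Mi -> w \in Mi -> u \in Q -> u \notin Mi ->
  exists2 u', (u' \in U) && (u' \notin Mi) &
   ( [/\ (u \in L v) = false, (u \in R v) = false, (u \in L w) = false, (u \in R w) = false &
        [/\ (u' \in L v) = false, (u' \in R v) = false, (u' \in L w) = false & (u' \in R w) = false]]
   \/ [/\ (u \in R v) = ~~ (u \in L v), (u \in R w) = ~~ (u \in L w),
          (u' \in R v) = ~~ (u' \in L v), (u' \in R w) = ~~ (u' \in L w) &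
        ((u \in L v) == (u' \in L v)) = ((u \in L w) == (u' \in L w))]).
Proof.
move=> Hser Hv Hw uQ uMi.
case: (ch_cover HQ uQ) => Mj Mjch uMj.
have MjMi : Mj != Mi by apply: contraNneq uMi => <-.
case: (rep HU Mjch) => u' /repP [u'U u'Mj u'uniq].
have u'Mi : u' \notin Mi := notin_other Mjch HMi MjMi u'Mj.
have noMj : forall x, x \in Mi -> x \notin Mj.
  by move=> x xMi; apply: (notin_other HMi Mjch) => //; rewrite eq_sym.
exists u'; first by rewrite u'U u'Mi.
have Eu' : forall x, x \in Mi -> adj x u' = adj x u.
  by move=> x xM; rewrite (ch_mod Mjch (noMj x xM) u'Mj uMj).
have Ew : adj w u = adj v u by rewrite adj_sym (ch_mod HMi uMi Hw Hv) adj_sym.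
case Auv: (adj v u).
- left.
  have Awu : adj w u by rewrite Ew.
  have Avu' : adj v u' by rewrite Eu'.
  have Awu' : adj w u' by rewrite Eu'.
  case: (notLR Auv) => -> ->; case: (notLR Awu) => -> ->.
  by case: (notLR Avu') => -> ->; case: (notLR Awu') => -> ->.
- right.
  have neq : forall x y, x \in Mi -> y \notin Mi -> x != y by move=> x y xM yM; apply: contraNneq yM => <-.
  have n1 : nonadj adj v u by rewrite /nonadj neq // Auv.
  have n2 : nonadj adj w u by rewrite /nonadj neq // Ew Auv.
  have n3 : nonadj adj v u' by rewrite /nonadj neq // Eu' // Auv.
  have n4 : nonadj adj w u' by rewrite /nonadj neq // Eu' // Ew Auv.
  rewrite (RE sides n1) (RE sides n2) (RE sides n3) (RE sides n4); split => //.
  rewrite (LE Hs n1) (LE Hs n2) (LE Hs n3) (LE Hs n4) !eqo.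
  have nuv : ~~ adj u v by rewrite adj_sym Auv.
  have nuw : ~~ adj u w by rewrite adj_sym Ew Auv.
  apply/idP/idP => /eqP E; apply/eqP.
  + exact: (K1 Hser Mjch MjMi uMj u'Mj Hv Hw nuv E).
  + exact: (K1 Hser Mjch MjMi uMj u'Mj Hw Hv nuw E).
Qed.

Lemma part2 v w : serial adj Mi -> v \in Mi -> w \in Mi ->
     ([set L v :&: (Q :\: Mi); R v :&: (Q :\: Mi)]
        = [set L w :&: (Q :\: Mi); R w :&: (Q :\: Mi)]
      <->
      [set L v :&: (U :\: Mi); R v :&: (U :\: Mi)]
        = [set L w :&: (U :\: Mi); R w :&: (U :\: Mi)]).
Proof.
move=> Hser Hv Hw.
have UQ : forall X : {set V}, X :&: (U :\: Mi) = X :&: (Q :\: Mi) :&: U.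
  move=> X; apply/setP => y; rewrite !inE.
  case yU: (y \in U); last by rewrite !andbF.
  by rewrite (subsetP (U_sub HU) y yU) !andbT.
split => /pairE H; apply/pairE.
  by case: H => [[E1 E2]|[E1 E2]]; [left|right]; rewrite !UQ E1 E2.
have goalE : forall (X Y : {set V}), (forall u, u \in Q -> u \notin Mi -> (u \in X) = (u \in Y)) ->
    X :&: (Q :\: Mi) = Y :&: (Q :\: Mi).
  move=> X Y HXY; apply/setP => u; rewrite !inE.
  case uQ: (u \in Q); last by rewrite !andbF.
  case uMi: (u \in Mi); first by rewrite !andbF.
  by rewrite !andbT HXY // uMi.
case: H => [[E1 E2]|[E1 E2]]; [left|right]; split; apply: goalE => u uQ uMi;
  case: (key Hser Hv Hw uQ uMi) => u' /andP [u'U u'Mi] K;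
  have h1 := congr1 (fun X : {set V} => u' \in X) E1; have h2 := congr1 (fun X : {set V} => u' \in X) E2;
  rewrite /= !inE u'U u'Mi /= !andbT in h1 h2;
  (case: K => [[F1 F2 F3 F4 [F5 F6 F7 F8]] | [Rv Rw Rv' Rw' KK]]; first by rewrite ?F1 ?F2 ?F3 ?F4);
  rewrite ?Rv ?Rw; rewrite ?Rv' ?Rw' in h1 h2; move: KK h1 h2;
  by case: (u \in L v); case: (u' \in L v); case: (u \in L w); case: (u' \in L w).
Qed.
End Main.

Theorem mainTheorem2 (V : finType) (adj : rel V) (L R : V -> {set V})
  (adj_sym : symmetric adj) (adj_irr : irreflexive adj)
  (sides : forall u : V,
     L u :&: R u = set0 /\ L u :|: R u = [set v | nonadj adj u v])
  (conf : exists s : seq (V * bool), conformal_model adj L R s)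
  (Q : {set V}) (HQ : prime_node adj Q)
  (U : {set V}) (HU : representatives adj Q U)
  (Mi : {set V}) (HMi : Mi \in md_children adj Q)
  (v w : V) (Hv : v \in Mi) (Hw : w \in Mi) :
  (parallel adj Mi ->
     ((forall u, u \in Q :\: Mi -> (forall x, x \in Mi -> nonadj adj u x) ->
         [set v; w] \subset L u \/ [set v; w] \subset R u)
      <->
      (forall u, u \in U :\: Mi -> (forall x, x \in Mi -> nonadj adj u x) ->
         [set v; w] \subset L u \/ [set v; w] \subset R u)))
  /\
  (serial adj Mi ->
     ([set L v :&: (Q :\: Mi); R v :&: (Q :\: Mi)]
        = [set L w :&: (Q :\: Mi); R w :&: (Q :\: Mi)]
      <->
      [set L v :&: (U :\: Mi); R v :&: (U :\: Mi)]
        = [set L w :&: (U :\: Mi); R w :&: (U :\: Mi)])).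
Proof.
case: conf => s Hs; split => [_|Hser].
  exact: (part1 adj_sym adj_irr sides Hs HQ HU HMi Hv Hw).
exact: (part2 adj_sym adj_irr sides Hs HQ HU HMi Hser Hv Hw).
Qed.
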